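(* Let $\ell\ge2$ and let $(\chi_1,\chi_2)$, $(\chi_3,\chi_4)$ be $\mathbf{ss}$-pairs. For $i\in[1,\ell-1]$ let $g_i=\begin{pmatrix}1&0\\ \epsilon\pi^i&1\end{pmatrix}$, $\mathrm B^i=\mathrm B(\mathfrak o_\ell)\cap g_i\mathrm B(\mathfrak o_\ell)g_i^{-1}$, and $(\chi_3,\chi_4)^{g_i}$ the character $x\mapsto(\chi_3,\chi_4)(g_i^{-1}xg_i)$ of $g_i\mathrm B(\mathfrak o_\ell)g_i^{-1}$. Then $\delta_i=\mathrm{Ind}_{\mathrm B^i}^{\mathrm B(\mathfrak o_\ell)}\big((\chi_1,\chi_2)\otimes(\chi_3,\chi_4)^{g_i}\big)$ is irreducible for every $i\in[1,\ell-1]$.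
   Context: Let $\mathcal O$ be a complete discrete valuation ring with maximal ideal $\mathfrak p=\pi\mathcal O$ and finite residue field of odd characteristic. Let $\mathfrak O=\mathcal O[\vartheta]$ be the unramified quadratic extension, with $\vartheta^2\in\mathcal O^\times$ a non-square, and Galois involution $x\mapsto x^\circ$, $\vartheta^\circ=-\vartheta$. Let $\mathfrak o_\ell=\mathcal O/\mathfrak p^\ell$, $\mathfrak O_\ell=\mathfrak O/\pi^\ell\mathfrak O$. $\mathrm G$ is $\mathrm{GL}_2$ (with $R_\ell=\mathfrak o_\ell$, $\epsilon=1$) or $\mathrm{GU}_2$ (with $\mathrm{GU}_2(\mathfrak o_\ell)=\{A\in\mathrm{GL}_2(\mathfrak O_\ell):A^\star A=I\}$, $(a_{ij})^\star=W(a_{ji}^\circ)W^{-1}$, $W=\begin{pmatrix}0&1\\1&0\end{pmatrix}$, $R_\ell=\mathfrak O_\ell$, $\epsilon=\vartheta$). $\mathrm B(\mathfrak o_\ell)$ is the group of upper triangular matrices in $\mathrm G(\mathfrak o_\ell)$. For characters $\chi,\chi'$ of $R_\ell^\times$, $(\chi,\chi')$ is the character $\begin{pmatrix}a&b\\0&c\end{pmatrix}\mapsto\chi(a)\chi'(c)$ of $\mathrm B(\mathfrak o_\ell)$; it is an $\mathbf{ss}$-pair if $\chi\chi'^{-1}$ is nontrivial on $1+\pi^{\ell-1}\mathfrak o_\ell$. *)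

(* Defs.v *)
From HB Require Import structures.
From mathcomp Require Import all_boot all_order all_algebra all_fingroup all_field all_character.
Set Implicit Arguments. Unset Strict Implicit. Unset Printing Implicit Defensive.
Import GRing.Theory Num.Theory.
Local Open Scope ring_scope.

(* o_l := O / p^l, presented intrinsically: a finite commutative local ring
   whose maximal ideal is generated by pi, with pi^(l-1) <> 0, pi^l = 0,
   and residue characteristic odd (2 is a unit). *)
Definition trunc_dvr_data (R : finComUnitRingType) (pi : R) (l : nat) : Prop :=
  [/\ pi ^+ l = 0, pi ^+ l.-1 != 0,
      (forall x : R, x \is a GRing.unit \/ exists y, x = pi * y)
    & (2%:R : R) \is a GRing.unit].

(* S = O_l = o_l[theta] with theta^2 = d a unit non-square (mod pi),
   iota : o_l -> O_l, sigma the Galois involution theta |-> -theta. *)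
Definition unram_quad_data (R : finComUnitRingType) (pi : R)
  (S : finComUnitRingType) (iota : R -> S) (sigma : S -> S) (theta : S) (d : R) : Prop :=
  [/\ theta ^+ 2 = iota d, d \is a GRing.unit,
      (forall x y : R, d - x ^+ 2 <> pi * y),
      (forall s : S, exists! ab : R * R, s = iota ab.1 + iota ab.2 * theta)
    & (forall a : R, sigma (iota a) = iota a) /\ sigma theta = - theta].

(* a character of the unit group R^x, given as a function on R that is a
   group homomorphism R^x -> C^x on the units *)
Definition unit_char (S : finComUnitRingType) (chi : S -> algC) : Prop :=
  chi 1 = 1 /\ forall x y : S, x \is a GRing.unit -> y \is a GRing.unit ->
    chi (x * y) = chi x * chi y.

Definition ss_pair (R S : finComUnitRingType) (iota : R -> S) (pi : R) (l : nat)
  (chi chi' : S -> algC) : Prop :=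
  exists y : R, chi (iota (1 + pi ^+ l.-1 * y)) != chi' (iota (1 + pi ^+ l.-1 * y)).

Definition Wmx (S : finComUnitRingType) : 'M[S]_2 := \matrix_(i, j) (i != j)%:R.

Definition mxstar (S : finComUnitRingType) (sigma : S -> S) (A : 'M[S]_2) : 'M[S]_2 :=
  Wmx S *m (map_mx sigma A)^T *m invmx (Wmx S).

Definition B_GL (R : finComUnitRingType) : {set {'GL_2[R]}} :=
  [set x : {'GL_2[R]} | GLval x ord_max ord0 == 0].

Definition B_GU (S : finComUnitRingType) (sigma : S -> S) : {set {'GL_2[S]}} :=
  [set x : {'GL_2[S]} | (GLval x ord_max ord0 == 0)
                        && (mxstar sigma (GLval x) *m GLval x == 1%:M)].

(* g_i = [[1,0],[eps pi^i, 1]] (determinant 1, hence in GL_2) *)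
Definition g_mx (R S : finComUnitRingType) (iota : R -> S) (pi : R) (eps : S) (i : nat)
  : 'M[S]_2 := \matrix_(r, c) (if r == c then 1 else
                                 if (r == ord_max) then eps * iota (pi ^+ i) else 0).

Definition g_el (R S : finComUnitRingType) (iota : R -> S) (pi : R) (eps : S) (i : nat)
  : {'GL_2[S]} := insubd (1%g : {'GL_2[S]}) (g_mx iota pi eps i : 'M[S]_(2.-1.+1)).

Definition pairchar (S : finComUnitRingType) (chi chi' : S -> algC) (A : 'M[S]_2) : algC :=
  chi (A ord0 ord0) * chi' (A ord_max ord_max).

Definition delta_irreducible (R S : finComUnitRingType) (iota : R -> S) (pi : R)
  (l : nat) (eps : S) (Bset : {set {'GL_2[S]}}) (chi1 chi2 chi3 chi4 : S -> algC) : Prop :=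
  forall i : nat, (1 <= i <= l.-1)%N ->
    let B := <<Bset>>%G in
    let g := g_el iota pi eps i in
    let Bi := (B :&: B :^ g^-1)%G in
    forall phi : 'CF(Bi),
      (forall x, x \in Bi ->
         phi x = pairchar chi1 chi2 (GLval x)
                 * pairchar chi3 chi4 (GLval (g^-1 * x * g)%g)) ->
      'Ind[B] phi \in irr B.

(* Main.v *)
Require Import Defs.
From HB Require Import structures.
From mathcomp Require Import all_boot all_order all_algebra all_fingroup all_field all_character.
From mathcomp Require Import ring zify.
Set Implicit Arguments. Unset Strict Implicit. Unset Printing Implicit Defensive.
Import GRing.Theory Num.Theory.
Local Open Scope ring_scope.


Section Mackey.
Variables (gT : finGroupType) (G H : {group gT}) (phi : 'CF(H)).
Hypotheses (sHG : H \subset G) (phi1 : phi 1%g = 1)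
  (phiM : {in H &, {morph phi : x y / (x * y)%g >-> x * y}}).

Lemma phi_lin : phi \is a linear_char.
Proof.
pose r x : 'M[algC]_1 := (phi x)%:M.
have rR : mx_repr H r.
  split; first by rewrite /r phi1.
  by move=> x y Hx Hy; rewrite /r phiM // scalar_mxM.
pose rG := MxRepresentation rR.
have -> : phi = cfRepr rG.
  by apply/cfun_inP => x Hx; rewrite cfunE Hx /= mulr1n /r mxtrace_scalar.
by apply/andP; split; [exact: cfRepr_char | rewrite cfRepr1].
Qed.

Lemma mackey_irr :
  (forall y, y \in G -> y \notin H ->
     exists2 z, z \in H & (z ^ y \in H)%g && (phi z != phi (z ^ y)%g)) ->
  'Ind[G] phi \in irr G.
Proof.
move=> Hy; have lin := phi_lin.
have nrm x : x \in H -> phi x * (phi x)^* = 1.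
  by move=> Hx; rewrite -normCK normC_lin_char // expr1n.
pose S y := \sum_(x in H) phi x * (phi (x ^ y)%g)^*.
have S_in y : y \in H -> S y = #|H|%:R.
  move=> Hy'; rewrite /S (eq_bigr (fun _ => 1)) ?sumr_const //.
  by move=> x Hx; rewrite cfunJ // nrm.
have S_out y : y \in G -> y \notin H -> S y = 0.
  move=> Gy nHy; have [z Hz /andP[Hzy nz]] := Hy y Gy nHy.
  pose K := (H :&: H :^ y^-1)%G.
  pose f x := phi x * (phi (x ^ y)%g)^*.
  rewrite /S (bigID (fun x => x ^ y \in H)%g) /=.
  rewrite [X in _ + X]big1 ?addr0; last first.
    by move=> x /andP[_ nx]; rewrite (cfun0 _ nx) rmorph0 mulr0.
  have -> : \sum_(i in H | (i ^ y)%g \in H) phi i * (phi (i ^ y)%g)^*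
          = \sum_(x in K) f x.
    by apply: eq_bigl => x; rewrite !inE mem_conjgV.
  have Kz : z \in K by rewrite !inE mem_conjgV Hz Hzy.
  have fM : {in K &, {morph f : a b / (a * b)%g >-> a * b}}.
    move=> a b; rewrite !inE !mem_conjgV => /andP[Ha Hay] /andP[Hb Hby].
    rewrite /f conjMg (phiM Ha Hb) (phiM Hay Hby) rmorphM /=.
    by rewrite mulrACA.
  have e : \sum_(x in K) f x = f z * \sum_(x in K) f x.
    rewrite mulr_sumr (reindex_inj (mulgI z)) /=.
    apply: eq_big => [x|x Kx]; first by rewrite groupMl.
    by rewrite fM // -(groupMl _ Kz).
  have fz1 : f z != 1.
    apply: contra nz => /eqP fz.
    have : f z * phi (z ^ y)%g = phi (z ^ y)%g by rewrite fz mul1r.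
    by rewrite /f -mulrA (mulrC _ (phi _)) nrm // mulr1 => ->.
  apply/eqP; move: e => /eqP; rewrite -subr_eq0 -{1}(mul1r (\sum_(x in K) f x)).
  by rewrite -mulrBl mulf_eq0 subr_eq0 eq_sym (negbTE fz1).
rewrite irrEchar cfInd_char ?lin_charW //=.
rewrite -Frobenius_reciprocity cfdotE.
have -> : \sum_(x in H) phi x * ('Res[H] ('Ind[G] phi) x)^*
        = #|H|%:R^-1 * \sum_(y in G) S y.
  rewrite /S exchange_big mulr_sumr; apply: eq_bigr => x Hx.
  rewrite cfResE // cfIndE // rmorphM /= fmorphV rmorph_nat rmorph_sum /=.
  by rewrite mulrCA mulr_sumr.
rewrite (bigID (fun y => y \in H)) /= [X in _ + X]big1 ?addr0; last first.
  by move=> y /andP[Gy nHy]; rewrite S_out.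
rewrite (eq_bigr (fun _ => #|H|%:R)); last by move=> y /andP[_ /S_in].
rewrite sumr_const.
have -> : #|[pred y in G | y \in H]| = #|H|.
  apply: eq_card => y; rewrite !inE; apply: andb_idl => Hy'.
  exact: (subsetP sHG).
rewrite -[_ *+ #|H|]mulr_natr; apply/eqP; field; exact: neq0CG.
Qed.
End Mackey.


Section Mx2.
Variable S : comUnitRingType.
Definition mx2 (a b c d : S) : 'M[S]_2 :=
  \matrix_(i, j) if i == ord0 then (if j == ord0 then a else b)
                 else (if j == ord0 then c else d).

Lemma mx2_00 a b c d : mx2 a b c d ord0 ord0 = a. Proof. by rewrite mxE. Qed.
Lemma mx2_01 a b c d : mx2 a b c d ord0 ord_max = b. Proof. by rewrite mxE. Qed.
Lemma mx2_10 a b c d : mx2 a b c d ord_max ord0 = c. Proof. by rewrite mxE. Qed.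
Lemma mx2_11 a b c d : mx2 a b c d ord_max ord_max = d. Proof. by rewrite mxE. Qed.

Lemma ord2P (i : 'I_2) : i = ord0 \/ i = ord_max.
Proof. by case: i => [[|[|k]] Hk] //; [left|right]; apply: val_inj. Qed.

Lemma mx2E (M : 'M[S]_2) :
  M = mx2 (M ord0 ord0) (M ord0 ord_max) (M ord_max ord0) (M ord_max ord_max).
Proof.
by apply/matrixP => i j; rewrite mxE; case: (ord2P i) => ->; case: (ord2P j) => ->.
Qed.

Lemma mx2_mul a b c d a' b' c' d' :
  mx2 a b c d *m mx2 a' b' c' d' =
  mx2 (a*a'+b*c') (a*b'+b*d') (c*a'+d*c') (c*b'+d*d').
Proof.
apply/matrixP => i j; rewrite !mxE !big_ord_recl big_ord0 addr0 !mxE.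
by case: (ord2P i) => ->; case: (ord2P j) => ->.
Qed.

Lemma mx2_inj a b c d a' b' c' d' :
  mx2 a b c d = mx2 a' b' c' d' -> [/\ a = a', b = b', c = c' & d = d'].
Proof.
move=> e; split.
- by rewrite -(mx2_00 a b c d) e mx2_00.
- by rewrite -(mx2_01 a b c d) e mx2_01.
- by rewrite -(mx2_10 a b c d) e mx2_10.
- by rewrite -(mx2_11 a b c d) e mx2_11.
Qed.

Lemma mx2_1 : (1%:M : 'M[S]_2) = mx2 1 0 0 1.
Proof.
by apply/matrixP => i j; rewrite !mxE; case: (ord2P i) => ->; case: (ord2P j) => ->.
Qed.

Lemma det_mx2 a b c d : \det (mx2 a b c d) = a * d - b * c.
Proof.
rewrite (expand_det_row _ ord0) !big_ord_recl big_ord0 addr0.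
rewrite /cofactor !det_mx11 !mxE /= /bump /=.
by rewrite expr0 expr1 !mul1r mulN1r mulrN.
Qed.
End Mx2.


Lemma nat_fact1 (l i : nat) : (2 <= l)%N -> (1 <= i)%N -> (l <= i + l.-1)%N.
Proof. move=> *; lia. Qed.
Lemma nat_fact2 (l : nat) : (2 <= l)%N -> (l <= l.-1 + l.-1)%N.
Proof. move=> *; lia. Qed.

Lemma nat_fact3 (l : nat) : (2 <= l)%N -> (0 < l.-1)%N.
Proof. move=> *; lia. Qed.

Section RLemmas.
Variables (R : finComUnitRingType) (pi : R) (l : nat).
Hypotheses (hl : (2 <= l)%N) (hR : trunc_dvr_data pi l).

Lemma piX_ge n : (l <= n)%N -> pi ^+ n = 0.
Proof.
case: hR => hl0 _ _ _ ln; by rewrite -(subnK ln) exprD hl0 mulr0.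
Qed.

Lemma R_nontriv : (1 : R) != 0.
Proof.
case: hR => _ hn _ _; apply: contraNneq hn => e.
by rewrite -(mul1r (pi ^+ _)) e mul0r.
Qed.

Lemma unit1pi x : 1 + pi * x \is a GRing.unit.
Proof.
case: hR => hl0 _ hU _.
case: (hU (1 + pi * x)) => // [[y e]].
have : pi * (y - x) = 1 by rewrite mulrBr -e addrK.
move=> h; have upi : pi \is a GRing.unit.
  by apply/unitrP; exists (y - x); rewrite h mulrC h.
have : pi ^+ l \is a GRing.unit by rewrite unitrX.
by rewrite hl0 unitr0.
Qed.

Lemma unit1piX k x : (0 < k)%N -> 1 + pi ^+ k * x \is a GRing.unit.
Proof. by case: k => // k _; rewrite exprS -mulrA unit1pi. Qed.

Lemma decomp_aux n x : x != 0 ->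
  (exists k u, u \is a GRing.unit /\ x = pi ^+ k * u) \/ (exists x', x = pi ^+ n * x').
Proof.
case: hR => _ _ hU _ nx.
elim: n => [|n IH]; first by right; exists x; rewrite expr0 mul1r.
case: IH => [h |[x' ->]]; first by left.
case: (hU x') => [ux'| [y ->]]; first by left; exists n, x'.
by right; exists y; rewrite exprS; ring.
Qed.

Lemma decomp x : x != 0 -> exists k u, u \is a GRing.unit /\ x = pi ^+ k * u.
Proof.
move=> nx; case: (decomp_aux l nx) => // [[x' e]].
by move: nx; rewrite e (piX_ge (leqnn l)) mul0r eqxx.
Qed.

Lemma chain_sol i D t : pi ^+ i * D != 0 ->
  exists nu, pi ^+ i * nu * D = pi ^+ l.-1 * t.
Proof.
move=> nz; have [k [u [uu e]]] := decomp nz.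
have kl : (k <= l.-1)%N.
  rewrite leqNgt; apply/negP => lt; move: nz; rewrite e piX_ge ?mul0r ?eqxx //.
  by move: lt; case: (l) => // l' /=.
exists (pi ^+ (l.-1 - k) * u^-1 * t).
transitivity (pi ^+ (l.-1 - k) * u^-1 * t * (pi ^+ i * D)); first by ring.
have -> : pi ^+ l.-1 = pi ^+ (l.-1 - k) * pi ^+ k by rewrite -exprD subnK.
rewrite e; transitivity (pi ^+ (l.-1 - k) * pi ^+ k * t * (u^-1 * u)); first by ring.
by rewrite mulVr // mulr1.
Qed.
End RLemmas.


Section GLH.
Variable S : finComUnitRingType.
Definition mkGL (M : 'M[S]_2) : {'GL_2[S]} := insubd (1%g : {'GL_2[S]}) M.
Lemma mkGLK M : M \in unitmx -> GLval (mkGL M) = M.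
Proof. by move=> u; rewrite /mkGL insubdK. Qed.

Lemma unitmx_mx2 (a b c d : S) : (mx2 a b c d \in unitmx) = (a * d - b * c \is a GRing.unit).
Proof. by rewrite unitmxE det_mx2. Qed.

Lemma mul_tri (M N : 'M[S]_2) : M ord_max ord0 = 0 -> N ord_max ord0 = 0 ->
  M *m N = mx2 (M ord0 ord0 * N ord0 ord0)
               (M ord0 ord0 * N ord0 ord_max + M ord0 ord_max * N ord_max ord_max)
               0 (M ord_max ord_max * N ord_max ord_max).
Proof.
move=> hM hN; rewrite {1}(mx2E M) {1}(mx2E N) hM hN mx2_mul.
by congr mx2; ring.
Qed.

Lemma GLdiag_unit (x : {'GL_2[S]}) : GLval x ord_max ord0 = 0 ->
  GLval x ord0 ord0 \is a GRing.unit /\ GLval x ord_max ord_max \is a GRing.unit.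
Proof.
move=> h; have := GL_unitmx x.
by rewrite unitmxE [val x]mx2E det_mx2 /= h mulr0 subr0 unitrM => /andP[].
Qed.

Lemma pc_mul (chi chi' : S -> algC) (x y : {'GL_2[S]}) :
  unit_char chi -> unit_char chi' ->
  GLval x ord_max ord0 = 0 -> GLval y ord_max ord0 = 0 ->
  pairchar chi chi' (GLval (x * y)%g) = pairchar chi chi' (GLval x) * pairchar chi chi' (GLval y).
Proof.
move=> [_ hc] [_ hc'] hx hy; have [ux ux'] := GLdiag_unit hx; have [uy uy'] := GLdiag_unit hy.
rewrite /pairchar GL_MxE mul_tri // mx2_00 mx2_11 hc // hc' //.
by ring.
Qed.

Lemma uchar_neq0 (chi : S -> algC) x : unit_char chi -> x \is a GRing.unit -> chi x != 0.
Proof.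
move=> [h1 hc] ux; apply/eqP => e.
have : chi (x * x^-1) = 0 by rewrite hc ?unitrV // e mul0r.
by rewrite mulrV // h1 => /eqP; rewrite oner_eq0.
Qed.
End GLH.


Section Key.
Variables (R : finComUnitRingType) (pi : R) (l : nat).
Hypotheses (hl : (2 <= l)%N) (hR : trunc_dvr_data pi l).
Variables (S : finComUnitRingType) (iota : {rmorphism R -> S}) (eps : S) (d0 : R).
Hypotheses (Heps : eps ^+ 2 = iota d0) (Hd0 : d0 \is a GRing.unit).
Variables (Gs : {group {'GL_2[S]}}) (Bset : {set {'GL_2[S]}}).
Hypothesis HB : forall x, (x \in Bset) = (x \in Gs) && (GLval x ord_max ord0 == 0).
Hypothesis Gg : forall i, (1 <= i <= l.-1)%N -> g_el iota pi eps i \in Gs.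
Hypothesis Hreal : forall i, (1 <= i <= l.-1)%N -> forall y, y \in Bset ->
  exists D0 : R, GLval y ord_max ord_max - GLval y ord0 ord0
                 - GLval y ord0 ord_max * (eps * iota (pi ^+ i))
                 = GLval y ord0 ord0 * iota D0.
Hypothesis Hz : forall a0 ai r0 : R, a0 * ai = 1 ->
  mkGL (mx2 (iota a0) (eps * iota (r0 * a0)) 0 (iota ai)) \in Gs.
Variables (chi1 chi2 chi3 chi4 : S -> algC).
Hypotheses (c1 : unit_char chi1) (c2 : unit_char chi2) (c3 : unit_char chi3)
  (c4 : unit_char chi4) (ss34 : ss_pair iota pi l chi3 chi4).

Lemma Bgroup : group_set Bset.
Proof.
apply/group_setP; split.
  have o : (ord_max == ord0 :> 'I_2) = false by [].
  by rewrite HB group1 GL_1E mxE o eqxx.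
move=> x y; rewrite !HB => /andP[Gx /eqP hx] /andP[Gy /eqP hy].
by rewrite groupM // andTb GL_MxE mul_tri // mx2_10.
Qed.

Lemma memB x : (x \in <<Bset>>%g) = (x \in Bset).
Proof. by rewrite (gen_set_id Bgroup). Qed.

Lemma mx2_1r : (1 : 'M[S]_2) = mx2 1 0 0 1.
Proof. exact: mx2_1. Qed.

Lemma GLinj (x y : {'GL_2[S]}) : GLval x = GLval y -> x = y.
Proof. exact: val_inj. Qed.

Theorem key : delta_irreducible iota pi l eps Bset chi1 chi2 chi3 chi4.
Proof.
move=> i Hi B g Bi phi Hphi.
have i0 : (0 < i)%N by case/andP: Hi.
set e := eps * iota (pi ^+ i).
have gE : GLval g = mx2 1 0 e 1.
  have gmx : g_mx iota pi eps i = mx2 1 0 e 1.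
    by apply/matrixP => r c; rewrite !mxE; case: (ord2P r) => ->; case: (ord2P c) => ->.
  rewrite /g /g_el gmx insubdK //.
  change (mx2 1 0 e 1 \in unitmx).
  by rewrite unitmx_mx2 mulr1 mul0r subr0 unitr1.
have giE : GLval g^-1 = mx2 1 0 (-e) 1.
  have u : mx2 1 0 (-e) 1 \in unitmx by rewrite unitmx_mx2 mulr1 mul0r subr0 unitr1.
  have gg : (g * mkGL (mx2 1 0 (-e) 1))%g = 1%g.
    apply: GLinj; rewrite GL_MxE mkGLK // gE mx2_mul GL_1E mx2_1r.
    by congr mx2; ring.
  have -> : g^-1%g = mkGL (mx2 1 0 (-e) 1) by rewrite -[RHS](mulKg g) gg mulg1.
  by rewrite mkGLK.
have conjE x : GLval x ord_max ord0 = 0 ->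
   GLval (g^-1 * x * g)%g =
   mx2 (GLval x ord0 ord0 + GLval x ord0 ord_max * e) (GLval x ord0 ord_max)
       (e * (GLval x ord_max ord_max - GLval x ord0 ord0 - GLval x ord0 ord_max * e))
       (GLval x ord_max ord_max - e * GLval x ord0 ord_max).
  move=> hx; rewrite !GL_MxE giE gE {1}(mx2E (GLval x)) hx !mx2_mul.
  by congr mx2; ring.
have Gg' : g \in Gs by exact: Gg.
have conjB x : x \in Bi -> (g^-1 * x * g)%g \in Bset.
  by rewrite inE memB mem_conjgV memB conjgE mulgA => /andP[].
have memBi x : (x \in Bi) = (x \in Bset) &&
   (e * (GLval x ord_max ord_max - GLval x ord0 ord0 - GLval x ord0 ord_max * e) == 0).
  rewrite inE memB mem_conjgV memB; case Bx : (x \in Bset) => //=.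
  move: Bx; rewrite HB => /andP[Gx /eqP hx].
  by rewrite HB groupJ // andTb conjgE mulgA conjE // mx2_10.
have phiE x : x \in Bi -> phi x =
   chi1 (GLval x ord0 ord0) * chi2 (GLval x ord_max ord_max) *
   (chi3 (GLval x ord0 ord0 + GLval x ord0 ord_max * e) *
    chi4 (GLval x ord_max ord_max - e * GLval x ord0 ord_max)).
  move=> Bix; rewrite Hphi // /pairchar conjE ?mx2_00 ?mx2_11 //.
  by move: Bix; rewrite memBi HB => /andP[/andP[_ /eqP]].
have BiB : Bi \subset B by exact: subsetIl.
apply: (mackey_irr BiB).
- rewrite Hphi ?group1 // mulg1 mulVg GL_1E /pairchar !mxE /=.
  by case: c1 => -> _; case: c2 => -> _; case: c3 => -> _; case: c4 => -> _; rewrite !mulr1.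
- move=> x y Bix Biy; rewrite !Hphi ?groupM //.
  have hx : GLval x ord_max ord0 = 0 by move: Bix; rewrite memBi HB => /andP[/andP[_ /eqP]].
  have hy : GLval y ord_max ord0 = 0 by move: Biy; rewrite memBi HB => /andP[/andP[_ /eqP]].
  have hgx : GLval (g^-1 * x * g)%g ord_max ord0 = 0.
    by move: (conjB _ Bix); rewrite HB => /andP[_ /eqP].
  have hgy : GLval (g^-1 * y * g)%g ord_max ord0 = 0.
    by move: (conjB _ Biy); rewrite HB => /andP[_ /eqP].
  have -> : (g^-1 * (x * y) * g = (g^-1 * x * g) * (g^-1 * y * g))%g.
    by rewrite !mulgA mulgK.
  by rewrite (pc_mul c1 c2 hx hy) (pc_mul c3 c4 hgx hgy) mulrACA.
move=> y By nBy.
rewrite /B memB in By.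
have /andP[Gy /eqP hy10] : (y \in Gs) && (GLval y ord_max ord0 == 0) by rewrite -HB.
have [ual uga] := GLdiag_unit hy10.
have [al [be [ga yE]]] : exists al be ga, GLval y = mx2 al be 0 ga.
  by exists (GLval y ord0 ord0), (GLval y ord0 ord_max), (GLval y ord_max ord_max);
     rewrite {1}(mx2E (GLval y)) hy10.
rewrite yE mx2_00 in ual; rewrite yE mx2_11 in uga.
have [D0 hD0] := Hreal Hi By.
rewrite yE mx2_00 mx2_01 mx2_11 -/e in hD0.
have nz : e * (ga - al - be * e) != 0.
  by move: nBy; rewrite memBi By yE mx2_00 mx2_01 mx2_11.
rewrite hD0 in nz.
have nzR : pi ^+ i * D0 != 0.
  apply: contraNneq nz => h.
  have h' : iota (pi ^+ i) * iota D0 = 0 by rewrite -rmorphM h rmorph0.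
  apply/eqP; rewrite /e; transitivity (eps * al * (iota (pi ^+ i) * iota D0)); first by ring.
  by rewrite h' mulr0.
case: ss34 => y0 hy0.
have u2 : (2%:R : R) \is a GRing.unit by case: hR.
pose h := (2%:R : R)^-1.
have H2 : 2%:R * h = 1 by rewrite mulrV.
pose t := - (y0 * h).
have [nu hnu] := chain_sol hR t nzR.
pose P := pi ^+ l.-1.
pose a0 := 1 + pi ^+ i * nu.
have ua0 : a0 \is a GRing.unit by exact: (unit1piX hR nu i0).
have [ai Ha] : exists ai, a0 * ai = 1 by exists a0^-1; rewrite mulrV.
pose di := d0^-1.
have Hd : d0 * di = 1 by rewrite mulrV.
pose r0 := - (nu * (2%:R + pi ^+ i * nu)) * ai ^+ 2 * di.
have pP : pi ^+ i * P = 0.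
  by rewrite /P -exprD (piX_ge hR) // nat_fact1.
have PP : P * P = 0 by rewrite /P -exprD (piX_ge hR) // nat_fact2.
have I1 : ai - a0 - d0 * (r0 * a0) * pi ^+ i = 0.
  pose K := ai * (pi ^+ i * nu * (2%:R + pi ^+ i * nu)).
  transitivity ((d0 * di - 1) * (a0 * ai) * K + (a0 * ai - 1) * (K + a0)).
    by rewrite /K /r0 /a0; ring.
  by rewrite Ha Hd subrr !mul0r add0r.
have I2 : d0 * (r0 * a0) * pi ^+ i * D0 = P * y0.
  transitivity (- (d0 * di) * (a0 * ai) * ai * (2%:R + pi ^+ i * nu) * (pi ^+ i * nu * D0)).
    by rewrite /r0; ring.
  rewrite Hd Ha hnu -/P /t.
  have e2 : ai * (2%:R + pi ^+ i * nu) * P = 2%:R * P.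
    transitivity (2%:R * (a0 * ai) * P - ai * nu * (pi ^+ i * P)).
      by rewrite /a0; ring.
    by rewrite Ha pP mulr0 subr0 mulr1.
  transitivity (ai * (2%:R + pi ^+ i * nu) * P * (y0 * h)); first by ring.
  rewrite e2; transitivity (P * y0 * (2%:R * h)); first by ring.
  by rewrite H2 mulr1.
have aiP : ai * P = P.
  transitivity (P - ai * nu * (pi ^+ i * P) + (a0 * ai - 1) * P).
    by rewrite /a0; ring.
  by rewrite pP Ha subrr mul0r addr0 mulr0 subr0.
have a0P : a0 * P = P.
  transitivity (P + nu * (pi ^+ i * P)); first by rewrite /a0; ring.
  by rewrite pP mulr0 addr0.
pose a := iota a0; pose c := iota ai; pose b := eps * iota (r0 * a0); pose De := iota D0.
have be_e : b * e = iota (d0 * (r0 * a0) * pi ^+ i).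
  rewrite /b /e !rmorphM /= -Heps; ring.
have h1 : c - a - b * e = 0.
  by rewrite be_e /c /a -!rmorphB I1 rmorph0.
have hD : e * b * De = iota (P * y0).
  by rewrite (mulrC e) be_e /De -rmorphM I2.
have hcP : c * iota (P * y0) = iota (P * y0) by rewrite /c -rmorphM mulrA aiP.
have haP : a * iota (P * y0) = iota (P * y0) by rewrite /a -rmorphM mulrA a0P.
have epz : e * iota (P * y0) = 0.
  by rewrite /e -mulrA -rmorphM mulrA pP mul0r rmorph0 mulr0.
pose ali := al^-1.
have h3 : al * ali = 1 by rewrite mulrV.
have h2 : ga - al - be * e - al * De = 0 by rewrite hD0 subrr.
pose b' := ali * (a * be + b * ga - be * c).
have G1 : al * b' + be * c = a * be + b * ga.
  transitivity ((al * ali - 1) * (a * be + b * ga - be * c) + (a * be + b * ga)).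
    by rewrite /b'; ring.
  by rewrite h3 subrr mul0r add0r.
have G2 : e * (c - a - b' * e) = 0.
  transitivity ((e + e ^+ 2 * ali * be) * (c - a - b * e)
      - e ^+ 2 * ali * b * (ga - al - be * e - al * De)
      - e ^+ 2 * b * (1 + De) * (al * ali - 1) - e * (e * b * De)).
    by rewrite /b'; ring.
  by rewrite h1 h2 h3 hD epz subrr !mulr0 !subr0.
have G3 : a + b' * e = c * iota (1 + P * y0).
  transitivity (c + e * b * De - (1 + e * ali * be) * (c - a - b * e)
      + e * ali * b * (ga - al - be * e - al * De) + e * b * (1 + De) * (al * ali - 1)).
    by rewrite /b'; ring.
  by rewrite h1 h2 h3 hD subrr !mulr0 subr0 !addr0 rmorphD rmorph1 mulrDr mulr1 hcP.
have G4 : c - e * b' = a * iota (1 - P * y0).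
  transitivity (a - e * b * De + (1 + e * ali * be) * (c - a - b * e)
      - e * ali * b * (ga - al - be * e - al * De) - e * b * (1 + De) * (al * ali - 1)).
    by rewrite /b'; ring.
  by rewrite h1 h2 h3 hD subrr !mulr0 !subr0 addr0 rmorphB rmorph1 mulrBr mulr1 haP.
have ac1 : a * c = 1 by rewrite /a /c -rmorphM Ha rmorph1.
have ua : a \is a GRing.unit by apply/unitrP; exists c; rewrite ac1 mulrC ac1.
have uc : c \is a GRing.unit by apply/unitrP; exists a; rewrite ac1 mulrC ac1.
have uz : mx2 a b 0 c \in unitmx by rewrite unitmx_mx2 ac1 mulr0 subr0 unitr1.
have uw : mx2 a b' 0 c \in unitmx by rewrite unitmx_mx2 ac1 mulr0 subr0 unitr1.
pose z := mkGL (mx2 a b 0 c); pose w := mkGL (mx2 a b' 0 c).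
have zE : GLval z = mx2 a b 0 c by rewrite mkGLK.
have wE : GLval w = mx2 a b' 0 c by rewrite mkGLK.
have Gz : z \in Gs by exact: Hz.
have Bz : z \in Bset by rewrite HB Gz zE mx2_10 eqxx.
have Biz : z \in Bi by rewrite memBi Bz zE mx2_00 mx2_01 mx2_11 h1 mulr0 eqxx.
have yw : (y * w = z * y)%g.
  apply: GLinj; rewrite !GL_MxE yE zE wE !mx2_mul.
  congr mx2; try ring.
  exact: G1.
have zy : (z ^ y)%g = w by rewrite conjgE -yw mulKg.
exists z => //; rewrite zy; apply/andP; split.
  rewrite memBi HB -zy groupJ // andTb zy wE mx2_10 eqxx /=.
  by rewrite mx2_00 mx2_01 mx2_11 G2.
have Biw : w \in Bi.
  rewrite memBi HB -zy groupJ // andTb zy wE mx2_10 eqxx /=.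
  by rewrite mx2_00 mx2_01 mx2_11 G2.
rewrite !phiE // zE wE !mx2_00 !mx2_01 !mx2_11 G3 G4.
have -> : a + b * e = c by apply/eqP; rewrite eq_sym -subr_eq0 opprD addrA h1.
have -> : c - e * b = a.
  by apply/eqP; rewrite -subr_eq0; apply/eqP; rewrite -h1; ring.
have uP1 : iota (1 + P * y0) \is a GRing.unit.
  by apply: rmorph_unit; apply: (unit1piX hR); exact: nat_fact3.
have uP2 : iota (1 - P * y0) \is a GRing.unit.
  rewrite -mulrN; apply: rmorph_unit; apply: (unit1piX hR); exact: nat_fact3.
case: c3 => c31 c3M; case: c4 => c41 c4M.
rewrite c3M // c4M //.
have n1 := uchar_neq0 c1 ua; have n2 := uchar_neq0 c2 uc.
have n3 := uchar_neq0 (conj c31 c3M) uc; have n4 := uchar_neq0 (conj c41 c4M) ua.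
have key4 : chi4 (iota (1 + P * y0)) * chi4 (iota (1 - P * y0)) = 1.
  rewrite -c4M // -rmorphM.
  have -> : (1 + P * y0) * (1 - P * y0) = 1.
    transitivity (1 - (P * P) * y0 ^+ 2); first by ring.
    by rewrite PP mul0r subr0.
  by rewrite rmorph1.
apply: contra hy0 => /eqP E.
have E' : chi3 (iota (1 + P * y0)) * chi4 (iota (1 - P * y0)) = 1.
  apply: (mulfI n1); apply: (mulfI n2); apply: (mulfI n3); apply: (mulfI n4).
  transitivity (chi1 a * chi2 c * (chi3 c * chi3 (iota (1 + P * y0)) * (chi4 a * chi4 (iota (1 - P * y0))))).
    by ring.
  rewrite -E; ring.
have X3 : chi3 (iota (1 + P * y0)) = chi4 (iota (1 + P * y0)).
  transitivity (chi3 (iota (1 + P * y0)) * (chi4 (iota (1 + P * y0)) * chi4 (iota (1 - P * y0)))).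
    by rewrite key4 mulr1.
  transitivity ((chi3 (iota (1 + P * y0)) * chi4 (iota (1 - P * y0))) * chi4 (iota (1 + P * y0))).
    by ring.
  by rewrite E' mul1r.
by apply/eqP; exact: X3.
Qed.
End Key.


Lemma gE_gen (R S : finComUnitRingType) (iota : R -> S) (pi : R) (eps : S) (i : nat) :
  GLval (g_el iota pi eps i) = mx2 1 0 (eps * iota (pi ^+ i)) 1.
Proof.
have gmx : g_mx iota pi eps i = mx2 1 0 (eps * iota (pi ^+ i)) 1.
  by apply/matrixP => r c; rewrite !mxE; case: (ord2P r) => ->; case: (ord2P c) => ->.
rewrite /g_el gmx insubdK //.
change (mx2 1 0 (eps * iota (pi ^+ i)) 1 \in unitmx).
by rewrite unitmx_mx2 mulr1 mul0r subr0 unitr1.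
Qed.

Theorem GL_case (R : finComUnitRingType) (pi : R) (l : nat)
  (hl : (2 <= l)%N) (hR : trunc_dvr_data pi l) :
  forall chi1 chi2 chi3 chi4 : R -> algC,
     unit_char chi1 -> unit_char chi2 -> unit_char chi3 -> unit_char chi4 ->
     ss_pair idfun pi l chi1 chi2 -> ss_pair idfun pi l chi3 chi4 ->
     delta_irreducible idfun pi l 1 (B_GL R) chi1 chi2 chi3 chi4.
Proof.
move=> chi1 chi2 chi3 chi4 c1 c2 c3 c4 _ ss34.
have e1 : (1 : R) ^+ 2 = idfun 1 by rewrite expr1n.
have := @key R pi l hl hR R idfun 1 1 e1 (unitr1 R)
  ('GL_2[R])%G (B_GL R).
apply.
- by move=> x; rewrite !inE.
- by move=> *; rewrite inE.
- move=> i Hi y; rewrite inE => /eqP hy.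
  have [ua _] := GLdiag_unit hy.
  exists ((GLval y ord0 ord0)^-1 * (GLval y ord_max ord_max - GLval y ord0 ord0
     - GLval y ord0 ord_max * (1 * idfun (pi ^+ i)))).
  by rewrite /= mulVKr.
- by move=> *; rewrite inE.
- exact: c1.
- exact: c2.
- exact: c3.
- exact: c4.
- exact: ss34.
Qed.

Section GU.
Variable S : finComUnitRingType.
Variable sigma : {rmorphism S -> S}.

Lemma Wmx_mx2 : Wmx S = mx2 0 1 1 0.
Proof.
by apply/matrixP => r c; rewrite !mxE; case: (ord2P r) => ->; case: (ord2P c) => ->.
Qed.

Lemma invW : invmx (Wmx S) = Wmx S.
Proof.
have WW : Wmx S *m Wmx S = 1%:M.
  by rewrite Wmx_mx2 mx2_mul mx2_1; congr mx2; ring.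
have [uW _] := mulmx1_unit WW.
by rewrite -[RHS](mulKmx uW) WW mulmx1.
Qed.

Lemma star_mx2 a b c d :
  mxstar sigma (mx2 a b c d) = mx2 (sigma d) (sigma b) (sigma c) (sigma a).
Proof.
rewrite /mxstar invW Wmx_mx2.
have -> : (map_mx sigma (mx2 a b c d))^T = mx2 (sigma a) (sigma c) (sigma b) (sigma d).
  by apply/matrixP => r s; rewrite !mxE; case: (ord2P r) => ->; case: (ord2P s) => ->.
by rewrite !mx2_mul; congr mx2; ring.
Qed.

Lemma starM (A B : 'M[S]_2) :
  mxstar sigma (A *m B) = mxstar sigma B *m mxstar sigma A.
Proof.
rewrite (mx2E A) (mx2E B) mx2_mul !star_mx2 mx2_mul !rmorphD !rmorphM /=.
by congr mx2; ring.
Qed.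

Lemma star1 : mxstar sigma 1%:M = 1%:M.
Proof. by rewrite mx2_1 star_mx2 rmorph0 rmorph1. Qed.

Definition Uset := [set x : {'GL_2[S]} | mxstar sigma (GLval x) *m GLval x == 1%:M].

Lemma Ugroup_set : group_set Uset.
Proof.
apply/group_setP; split.
  by rewrite inE GL_1E star1 mul1mx.
move=> x y; rewrite !inE => /eqP hx /eqP hy.
by rewrite GL_MxE starM mulmxA -(mulmxA _ _ (GLval x)) hx mulmx1 hy.
Qed.

Canonical Ugroup := group Ugroup_set.
End GU.

Theorem GU_case (R : finComUnitRingType) (pi : R) (l : nat)
  (hl : (2 <= l)%N) (hR : trunc_dvr_data pi l) :
  forall (S : finComUnitRingType) (iota : {rmorphism R -> S})
          (sigma : {rmorphism S -> S}) (theta : S) (d : R),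
     unram_quad_data pi iota sigma theta d ->
     forall chi1 chi2 chi3 chi4 : S -> algC,
     unit_char chi1 -> unit_char chi2 -> unit_char chi3 -> unit_char chi4 ->
     ss_pair iota pi l chi1 chi2 -> ss_pair iota pi l chi3 chi4 ->
     delta_irreducible iota pi l theta (B_GU sigma) chi1 chi2 chi3 chi4.
Proof.
move=> S iota sigma theta d [Hth Hd _ Huniq [Hsi Hst]] chi1 chi2 chi3 chi4
  c1 c2 c3 c4 _ ss34.
have u2 : (2%:R : R) \is a GRing.unit by case: hR.
have u2S : (2%:R : S) \is a GRing.unit by rewrite -(rmorph_nat iota) rmorph_unit.
have real s : sigma s = s -> exists r, s = iota r.
  move=> fs; case: (Huniq s) => [[x y] [/= es _]]; exists x.
  have ss : sigma s = iota x - iota y * theta.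
    by rewrite {1}es rmorphD rmorphM /= !Hsi Hst mulrN.
  have e2 : 2%:R * (iota y * theta) = 0.
    transitivity ((iota x + iota y * theta) - (iota x - iota y * theta)); first by ring.
    by rewrite -es -ss fs subrr.
  have Y0 : iota y * theta = 0.
    by rewrite -[LHS](mulKr u2S) e2 mulr0.
  by rewrite es Y0 addr0.
apply: (key hl hR Hth Hd (Gs := Ugroup sigma) (Bset := B_GU sigma)).
- by move=> x; rewrite !inE andbC.
- move=> i Hi; rewrite inE gE_gen star_mx2 mx2_mul rmorph1 rmorph0 rmorphM /= Hst Hsi.
  by rewrite mx2_1; apply/eqP; congr mx2; ring.
- move=> i Hi y; rewrite !inE => /andP[/eqP hy10 /eqP hst].
  have [ual _] := GLdiag_unit hy10.
  have [al [be [ga yE]]] : exists al be ga, GLval y = mx2 al be 0 ga.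
    by exists (GLval y ord0 ord0), (GLval y ord0 ord_max), (GLval y ord_max ord_max);
       rewrite {1}(mx2E (GLval y)) hy10.
  rewrite yE mx2_00 in ual.
  rewrite yE star_mx2 mx2_mul rmorph0 mx2_1 !mulr0 !mul0r !addr0 !add0r in hst.
  case/mx2_inj: hst => e00 e01 _ e11.
  pose e := theta * iota (pi ^+ i).
  pose ali := al^-1.
  have h3 : al * ali = 1 by rewrite mulrV.
  have h3' : ali * al = 1 by rewrite mulVr.
  have sga : sigma ga = ali.
    transitivity (sigma ga * (al * ali)); first by rewrite /ali mulrV // mulr1.
    by rewrite mulrA e00 mul1r.
  have sali : sigma ali = ga.
    have : sigma ali * sigma al = 1 by rewrite -rmorphM h3' rmorph1.
    move=> h; transitivity (sigma ali * (sigma al * ga)); first by rewrite e11 mulr1.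
    by rewrite mulrA h mul1r.
  have se : sigma e = - e by rewrite /e rmorphM /= Hst Hsi mulNr.
  rewrite sga in e01.
  pose q := ali * (ga - al - be * e).
  have fq : sigma q = q.
    rewrite /q rmorphM rmorphB rmorphB rmorphM /= sali sga se.
    apply/eqP; rewrite -subr_eq0; apply/eqP.
    transitivity (- (sigma al * ga - 1) + (ali * al - 1) + e * (ali * be + sigma be * ga)).
      by ring.
    by rewrite e11 h3' e01 subrr oppr0 add0r mulr0 addr0.
  have [D0 hD0] := real q fq.
  exists D0; rewrite yE mx2_00 mx2_01 mx2_11 -hD0 /q.
  by rewrite (mulrA al) h3 mul1r.
- move=> a0 ai r0 Ha.
  have hai : iota ai * iota a0 = 1 by rewrite -rmorphM mulrC Ha rmorph1.
  have u : mx2 (iota a0) (theta * iota (r0 * a0)) 0 (iota ai) \in unitmx.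
    by rewrite unitmx_mx2 mulr0 subr0 mulrC hai unitr1.
  rewrite inE mkGLK // star_mx2 mx2_mul rmorph0 rmorphM /= !Hsi Hst mx2_1.
  apply/eqP; congr mx2.
  + by rewrite mulr0 addr0.
  + by ring.
  + by ring.
  + by rewrite mul0r add0r mulrC.
- exact: c1.
- exact: c2.
- exact: c3.
- exact: c4.
- exact: ss34.
Qed.

Theorem lemma8p1 (R : finComUnitRingType) (pi : R) (l : nat)
  (hl : (2 <= l)%N) (hR : trunc_dvr_data pi l) :
  (* G = GL_2 : R_l = o_l, eps = 1 *)
  (forall chi1 chi2 chi3 chi4 : R -> algC,
     unit_char chi1 -> unit_char chi2 -> unit_char chi3 -> unit_char chi4 ->
     ss_pair idfun pi l chi1 chi2 -> ss_pair idfun pi l chi3 chi4 ->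
     delta_irreducible idfun pi l 1 (B_GL R) chi1 chi2 chi3 chi4)
  /\
  (* G = GU_2 : R_l = O_l, eps = theta *)
  (forall (S : finComUnitRingType) (iota : {rmorphism R -> S})
          (sigma : {rmorphism S -> S}) (theta : S) (d : R),
     unram_quad_data pi iota sigma theta d ->
     forall chi1 chi2 chi3 chi4 : S -> algC,
     unit_char chi1 -> unit_char chi2 -> unit_char chi3 -> unit_char chi4 ->
     ss_pair iota pi l chi1 chi2 -> ss_pair iota pi l chi3 chi4 ->
     delta_irreducible iota pi l theta (B_GU sigma) chi1 chi2 chi3 chi4).
Proof.
split; [exact: GL_case | exact: GU_case].
Qed.
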